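(* Let $P$ and $Q$ be irreducible transition matrices on the finite set $S$, both reversible with respect to $\pi$, whose eigenvalues (counting multiplicity) are identical, and suppose $P\ne Q$. Then $P$ does not efficiency-dominate $Q$, and $Q$ does not efficiency-dominate $P$.
   Context: $S$ is a finite set, and $\pi$ is a probability distribution on $S$ with $\pi(x)>0$ for all $x$. A transition matrix $P$ is reversible with respect to $\pi$ if $\pi(x)P(x,y)=\pi(y)P(y,x)$ for all $x,y$; irreducible if every state can be reached from every other with positive probability in some number of steps. For a Markov chain $X_1,X_2,\dots$ with transition matrix $P$ and $X_1\sim\pi$, $v(f,P)=\lim_{N\to\infty}\frac1N\mathrm{Var}\big(\sum_{i=1}^N f(X_i)\big)$. $P$ efficiency-dominates $Q$ if $v(f,P)\le v(f,Q)$ for all $f:S\to\mathbb R$. *)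

(* Defs.v *)
(* The finite state space S is 'I_n. *)
From HB Require Import structures.
From mathcomp Require Import all_boot all_order all_algebra.
From mathcomp Require Import all_classical all_reals all_analysis.
Set Implicit Arguments. Unset Strict Implicit. Unset Printing Implicit Defensive.
Import Order.TTheory GRing.Theory Num.Theory.
Import numFieldNormedType.Exports.
Local Open Scope ring_scope.

Section MC.
Variables (R : realType) (n : nat).

Definition prob_pos (pi : 'I_n -> R) : Prop :=
  (forall x, 0 < pi x) /\ \sum_x pi x = 1.

Definition transition_matrix (P : 'M[R]_n) : Prop :=
  (forall x y, 0 <= P x y) /\ (forall x, \sum_y P x y = 1).

Definition reversible (pi : 'I_n -> R) (P : 'M[R]_n) : Prop :=
  forall x y, pi x * P x y = pi y * P y x.

Definition irreducible (P : 'M[R]_n) : Prop :=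
  forall x y, exists k : nat, 0 < (P ^+ k) x y.

(* law of (X_1,...,X_{N+1}) for the chain with X_1 ~ pi *)
Definition path_prob (pi : 'I_n -> R) (P : 'M[R]_n) (N : nat)
  (p : {ffun 'I_N.+1 -> 'I_n}) : R :=
  pi (p ord0) * \prod_(i < N) P (p (inord i)) (p (inord i.+1)).

Definition path_expect (pi : 'I_n -> R) (P : 'M[R]_n) (N : nat)
  (g : {ffun 'I_N.+1 -> 'I_n} -> R) : R :=
  \sum_(p : {ffun 'I_N.+1 -> 'I_n}) path_prob pi P p * g p.

Definition path_sum (f : 'I_n -> R) (N : nat) (p : {ffun 'I_N.+1 -> 'I_n}) : R :=
  \sum_(i < N.+1) f (p i).

Definition var_sum (pi : 'I_n -> R) (P : 'M[R]_n) (f : 'I_n -> R) (N : nat) : R :=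
  path_expect pi P (fun p : {ffun 'I_N.+1 -> 'I_n} => path_sum f p ^+ 2)
  - (path_expect pi P (path_sum f (N:=N))) ^+ 2.

Definition asym_var (pi : 'I_n -> R) (P : 'M[R]_n) (f : 'I_n -> R) : R :=
  limn (fun N : nat => var_sum pi P f N / N.+1%:R).

Definition efficiency_dominates (pi : 'I_n -> R) (P Q : 'M[R]_n) : Prop :=
  forall f : 'I_n -> R, asym_var pi P f <= asym_var pi Q f.

End MC.

(* Main.v *)
Require Import Defs.
From HB Require Import structures.
From mathcomp Require Import all_boot all_order all_algebra.
From mathcomp Require Import all_classical all_reals all_analysis.
From mathcomp Require Import ring lra.
Set Implicit Arguments. Unset Strict Implicit. Unset Printing Implicit Defensive.
Import Order.TTheory GRing.Theory Num.Theory.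
Import numFieldNormedType.Exports.
Local Open Scope ring_scope.

Section Stoch.
Variables (R : realType) (n : nat).
Implicit Types (P Q : 'M[R]_n).

Lemma stoch_pow P : transition_matrix P -> forall k, transition_matrix (P ^+ k).
Proof.
move=> [P0 P1]; elim=> [|k [IH0 IH1]].
  split=> [x y|x]; first by rewrite expr0 mxE ler0n.
  rewrite expr0 (bigD1 x) //= mxE eqxx big1 ?addr0 // => y /negbTE.
  by rewrite mxE eq_sym => ->.
split=> [x y|x].
  rewrite exprS -mulmxE mxE; apply: sumr_ge0 => z _; exact: mulr_ge0.
rewrite exprS -mulmxE.
under eq_bigr do rewrite mxE.
rewrite exchange_big /= -(P1 x); apply: eq_bigr => z _.
by rewrite -mulr_sumr IH1 mulr1.
Qed.

Lemma stoch_le1 P : transition_matrix P -> forall x y, P x y <= 1.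
Proof.
move=> [P0 P1] x y; rewrite -(P1 x) (bigD1 y) //= lerDl.
by apply: sumr_ge0 => z _.
Qed.

Lemma harmonic_const P (h : 'I_n -> R) : transition_matrix P -> irreducible P ->
  (forall x, \sum_y P x y * h y = h x) -> forall x y, h x = h y.
Proof.
move=> tP irr hh x0.
pose xm := [arg max_(i > x0) h i]%O.
have hmax : forall z, h z <= h xm.
  by move=> z; rewrite /xm; case: arg_maxP => // i _ H; apply: H.
have hk : forall k x, \sum_y (P ^+ k) x y * h y = h x.
  elim=> [|k IH] x.
    rewrite (bigD1 x) //= expr0 mxE eqxx mul1r big1 ?addr0 // => y /negbTE.
    by rewrite mxE eq_sym => ->; rewrite mul0r.
  rewrite exprS -mulmxE.
  under eq_bigr do rewrite mxE mulr_suml.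
  rewrite exchange_big /= -hh; apply: eq_bigr => z _.
  by rewrite -IH mulr_sumr; apply: eq_bigr => y _; rewrite mulrA.
have key : forall y, h y = h xm.
  move=> y; have [k Hk] := irr xm y.
  have [T0 T1] := stoch_pow tP k.
  apply/eqP; rewrite eq_le hmax /=.
  have E : \sum_z (P ^+ k) xm z * (h xm - h z) = 0.
    under eq_bigr do rewrite mulrBr.
    by rewrite sumrB hk -mulr_suml T1 mul1r subrr.
  have := @psumr_eq0P _ _ predT (fun z => (P ^+ k) xm z * (h xm - h z)) _ E y isT.
    move=> /(_ _)/eqP; rewrite mulf_eq0 (gt_eqF Hk) /= subr_eq0 => /(_ _)/eqP -> //.
  by move=> z _; rewrite mulr_ge0 // subr_ge0.
by move=> y; rewrite !key.
Qed.

End Stoch.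

Section Alg.
Variables (R : realType) (n : nat) (pi : 'I_n -> R).
Hypothesis pp : prob_pos pi.
Implicit Types (P Q : 'M[R]_n).

Definition Pim : 'M[R]_n := \matrix_(i, j) pi j.
Definition Mm P : 'M[R]_n := 1%:M - P + Pim.

Lemma sum_delta (F : 'I_n -> R) i : \sum_x (x == i)%:R * F x = F i.
Proof.
rewrite (bigD1 i) //= eqxx mul1r big1 ?addr0 // => y /negbTE ->; by rewrite mul0r.
Qed.

Lemma sum_delta' (F : 'I_n -> R) i : \sum_x (i == x)%:R * F x = F i.
Proof. by under eq_bigr do rewrite eq_sym; exact: sum_delta. Qed.

Lemma stationary P : transition_matrix P -> reversible pi P ->
  forall y, \sum_x pi x * P x y = pi y.
Proof.
move=> [_ P1] rev y; under eq_bigr do rewrite rev.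
by rewrite -mulr_sumr P1 mulr1.
Qed.

Lemma PPim P : transition_matrix P -> P *m Pim = Pim.
Proof.
move=> [_ P1]; apply/matrixP => i j; rewrite !mxE.
under eq_bigr do rewrite mxE.
by rewrite -mulr_suml P1 mul1r.
Qed.

Lemma PimP P : transition_matrix P -> reversible pi P -> Pim *m P = Pim.
Proof.
move=> tP rev; apply/matrixP => i j; rewrite !mxE.
under eq_bigr do rewrite mxE.
by rewrite stationary.
Qed.

Lemma PimPim : Pim *m Pim = Pim.
Proof.
apply/matrixP => i j; rewrite !mxE.
under eq_bigr do rewrite !mxE.
by rewrite -mulr_suml pp.2 mul1r.
Qed.

Lemma Mm_unit P : transition_matrix P -> irreducible P -> reversible pi P ->
  Mm P \in unitmx.
Proof.
move=> tP irr rev; rewrite unitmxE unitfE -det_tr; apply/negP => /det0P [v v0 hv].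
pose h y := v 0 y.
have E : forall x, h x - \sum_y P x y * h y + \sum_y pi y * h y = 0.
  move=> x; have H0 : (v *m (Mm P)^T) 0 x = 0 by rewrite hv mxE.
  rewrite mxE in H0; rewrite -[RHS]H0.
  rewrite [RHS](eq_bigr (fun j => (x == j)%:R * h j - P x j * h j + pi j * h j)); last first.
    move=> j _. rewrite mxE /Mm; rewrite !mxE /h; ring.
  by rewrite big_split sumrB /= sum_delta'.
have s0 : \sum_y pi y * h y = 0.
  have E2 : \sum_x pi x * (h x - \sum_y P x y * h y + \sum_y pi y * h y) = 0.
    by rewrite big1 // => x _; rewrite E mulr0.
  have T1 : \sum_x pi x * (\sum_y P x y * h y) = \sum_y pi y * h y.
    under eq_bigr do rewrite mulr_sumr.
    rewrite exchange_big /=; apply: eq_bigr => y _.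
    by under eq_bigr do rewrite mulrA; rewrite -mulr_suml stationary.
  have T2 : \sum_x pi x * (\sum_y pi y * h y) = \sum_y pi y * h y.
    by rewrite -mulr_suml pp.2 mul1r.
  rewrite -[RHS]E2 [RHS](eq_bigr (fun x => pi x * h x - pi x * (\sum_y P x y * h y) + pi x * (\sum_y pi y * h y))); last by move=> x _; ring.
  by rewrite big_split sumrB /= T1 T2 subrr add0r.
have harm : forall x, \sum_y P x y * h y = h x.
  by move=> x; have := E x; rewrite s0 addr0 => /eqP; rewrite subr_eq0 eq_sym => /eqP.
have hc := harmonic_const tP irr harm.
apply/negP: v0; rewrite negbK; apply/eqP/matrixP => i j.
rewrite ord1 mxE -/(h j).
have <- : \sum_y pi y * h y = h j.
  rewrite (eq_bigr (fun y => pi y * h j)) => [|y _]; last by rewrite (hc y j).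
  by rewrite -mulr_suml pp.2 mul1r.
exact: s0.
Qed.

End Alg.

Section Paths.
Variables (R : realType) (n : nat) (pi : 'I_n -> R) (P : 'M[R]_n) (f : 'I_n -> R).

Definition pext N (q : {ffun 'I_N.+1 -> 'I_n}) (y : 'I_n) : {ffun 'I_N.+2 -> 'I_n} :=
  [ffun i : 'I_N.+2 => if (i < N.+1)%N then q (inord i) else y].

Lemma sum_pext N (F : {ffun 'I_N.+2 -> 'I_n} -> R) :
  \sum_p F p = \sum_q \sum_y F (pext q y).
Proof.
rewrite [RHS]pair_big /=.
rewrite (reindex (fun qy : {ffun 'I_N.+1 -> 'I_n} * 'I_n => pext qy.1 qy.2)) //.
exists (fun p : {ffun 'I_N.+2 -> 'I_n} =>
          ([ffun j : 'I_N.+1 => p (widen_ord (leqnSn _) j)], p ord_max)).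
  move=> [q y] _ /=; congr pair.
    apply/ffunP => j; rewrite !ffunE /= ltn_ord; congr (q _).
    by apply: val_inj; rewrite /= inordK.
  by rewrite ffunE /= ltnn.
move=> p _; apply/ffunP => i; rewrite !ffunE /=.
case: ifP => hi; rewrite ?ffunE; congr (p _); apply: val_inj => /=.
  by rewrite inordK.
apply/eqP; rewrite eqn_leq; apply/andP; split; first by rewrite ltnNge -ltnS hi.
exact: ltn_ord i.
Qed.

Lemma pext_last N q y : pext (N:=N) q y ord_max = y.
Proof. by rewrite ffunE /= ltnn. Qed.

Lemma path_prob_pext N q y :
  path_prob pi P (pext (N:=N) q y) = path_prob pi P q * P (q ord_max) y.
Proof.
rewrite /path_prob big_ord_recr /= mulrA; congr (_ * _ * _).
- rewrite ffunE /=; congr (pi (q _)); apply: val_inj => /=; by rewrite inordK.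
- apply: eq_bigr => i _; have hi : (i < N)%N := ltn_ord i.
  have h3 : (i < N.+1)%N := ltn_trans hi (ltnSn N).
  have h1 : (i < N.+2)%N := ltn_trans h3 (ltnSn N.+1).
  have h2 : (i.+1 < N.+2)%N by rewrite ltnS.
  have h4 : (i.+1 < N.+1)%N by rewrite ltnS.
  by rewrite !ffunE /= (inordK h1) (inordK h2) h3 h4.
- rewrite !ffunE /= !inordK // ltnn ltnSn; congr (P (q _) y).
  by apply: val_inj; rewrite /= inordK.
Qed.

Lemma path_sum_pext N q y :
  path_sum f (pext (N:=N) q y) = path_sum f q + f y.
Proof.
rewrite /path_sum big_ord_recr /= pext_last; congr (_ + _).
apply: eq_bigr => i _; rewrite ffunE /= ltn_ord; congr (f (q _)).
by apply: val_inj; rewrite /= inordK.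
Qed.

Lemma G_step N (phi : 'I_n -> R -> R) :
  path_expect pi P (fun p : {ffun 'I_N.+2 -> 'I_n} => phi (p ord_max) (path_sum f p)) =
  path_expect pi P (fun q : {ffun 'I_N.+1 -> 'I_n} =>
     \sum_y P (q ord_max) y * phi y (path_sum f q + f y)).
Proof.
rewrite /path_expect sum_pext; apply: eq_bigr => q _; rewrite mulr_sumr.
apply: eq_bigr => y _; rewrite path_prob_pext pext_last path_sum_pext.
by rewrite mulrA.
Qed.

Lemma G_zero (F : {ffun 'I_1 -> 'I_n} -> R) :
  path_expect pi P F = \sum_x pi x * F [ffun => x].
Proof.
rewrite /path_expect (reindex (fun x : 'I_n => [ffun => x] : {ffun 'I_1 -> 'I_n})).
  by apply: eq_bigr => x _; rewrite /path_prob big_ord0 mulr1 ffunE.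
exists (fun p : {ffun 'I_1 -> 'I_n} => p ord0) => [x _|p _]; first by rewrite ffunE.
by apply/ffunP => i; rewrite ffunE; congr (p _); apply: val_inj; case: i => [[]].
Qed.

Lemma path_expectD N (F G : {ffun 'I_N.+1 -> 'I_n} -> R) :
  path_expect pi P (fun p => F p + G p) = path_expect pi P F + path_expect pi P G.
Proof. by rewrite /path_expect -big_split; apply: eq_bigr => p _; rewrite mulrDr. Qed.

Lemma path_expectZ N c (F : {ffun 'I_N.+1 -> 'I_n} -> R) :
  path_expect pi P (fun p => c * F p) = c * path_expect pi P F.
Proof. by rewrite /path_expect mulr_sumr; apply: eq_bigr => p _; ring. Qed.

Lemma path_expect_ext N (F G : {ffun 'I_N.+1 -> 'I_n} -> R) :
  F =1 G -> path_expect pi P F = path_expect pi P G.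
Proof. by move=> FG; rewrite /path_expect; apply: eq_bigr => p _; rewrite FG. Qed.

End Paths.

Section Moments.
Variables (R : realType) (n : nat) (pi : 'I_n -> R) (P : 'M[R]_n).
Hypotheses (pp : prob_pos pi) (tP : transition_matrix P) (rev : reversible pi P).

Lemma stat_sum (F : 'I_n -> R) :
  \sum_x pi x * (\sum_y P x y * F y) = \sum_y pi y * F y.
Proof.
under eq_bigr do rewrite mulr_sumr.
rewrite exchange_big /=; apply: eq_bigr => y _.
rewrite (eq_bigr (fun x => pi x * P x y * F y)); last by move=> x _; ring.
by rewrite -mulr_suml stationary.
Qed.

Lemma E1 N (al : 'I_n -> R) :
  path_expect pi P (fun p : {ffun 'I_N.+1 -> 'I_n} => al (p ord_max)) = \sum_x pi x * al x.
Proof.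
elim: N al => [|N IH] al.
  by rewrite G_zero; apply: eq_bigr => x _; rewrite ffunE.
transitivity (path_expect pi P (fun p : {ffun 'I_N.+2 -> 'I_n} =>
   (fun y (_ : R) => al y) (p ord_max) (path_sum al p))); first by [].
rewrite (G_step pi P al N (fun y _ => al y)) /= (IH (fun x => \sum_y P x y * al y)) /=.
under eq_bigr do rewrite mulr_sumr.
rewrite exchange_big /=; apply: eq_bigr => y _.
by under eq_bigr do rewrite mulrA; rewrite -mulr_suml stationary.
Qed.

Lemma T2 (h : 'I_n -> R) N (be : 'cV[R]_n) :
  path_expect pi P (fun p : {ffun 'I_N.+1 -> 'I_n} => be (p ord_max) 0 * path_sum h p) =
  \sum_(k < N.+1) \sum_x pi x * h x * ((P ^+ k *m be) x 0).
Proof.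
elim: N be => [|N IH] be.
  rewrite G_zero big_ord1 expr0 mul1mx; apply: eq_bigr => x _.
  by rewrite /path_sum big_ord1 !ffunE; ring.
transitivity (path_expect pi P (fun p : {ffun 'I_N.+2 -> 'I_n} =>
   (fun y (s : R) => be y 0 * s) (p ord_max) (path_sum h p))); first by [].
rewrite (G_step pi P h N (fun y (s : R) => be y 0 * s)) /=.
rewrite (@path_expect_ext _ _ pi P _ _ (fun q => (P *m be) (q ord_max) 0 * path_sum h q +
            (fun x => \sum_y P x y * (be y 0 * h y)) (q ord_max))); last first.
  move=> q /=; rewrite mxE mulr_suml -big_split /=; apply: eq_bigr => y _; ring.
rewrite path_expectD IH (E1 N (fun x => \sum_y P x y * (be y 0 * h y))) [RHS]big_ord_recl expr0 mul1mx addrC; congr (_ + _); last first.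
  apply: eq_bigr => k _; apply: eq_bigr => x _.
  by rewrite lift0 exprSr -mulmxE mulmxA.
rewrite /= stat_sum; apply: eq_bigr => x _; ring.
Qed.

Lemma Pk_one k x : \sum_y (P ^+ k) x y = 1.
Proof. by have [_ ->] := stoch_pow tP k. Qed.

Lemma ES (h : 'I_n -> R) N :
  path_expect pi P (fun p : {ffun 'I_N.+1 -> 'I_n} => path_sum h p) =
  N.+1%:R * \sum_x pi x * h x.
Proof.
rewrite (@path_expect_ext _ _ pi P _ _ (fun p => (const_mx 1 : 'cV[R]_n) (p ord_max) 0 * path_sum h p));
  last by move=> p; rewrite mxE mul1r.
rewrite T2 (eq_bigr (fun _ => \sum_x pi x * h x)) ?sumr_const ?card_ord ?mulr_natl //.
move=> k _; apply: eq_bigr => x _; rewrite mxE.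
by under eq_bigr do rewrite mxE mulr1; rewrite Pk_one mulr1.
Qed.

Definition colf (h : 'I_n -> R) : 'cV[R]_n := \col_x h x.

Lemma T3 (h : 'I_n -> R) N :
  path_expect pi P (fun p : {ffun 'I_N.+1 -> 'I_n} => path_sum h p ^+ 2) =
  N.+1%:R * (\sum_x pi x * h x ^+ 2) +
  2 * \sum_(j < N) \sum_(k < j.+1) \sum_x pi x * h x * ((P ^+ k.+1 *m colf h) x 0).
Proof.
elim: N => [|N IH].
  rewrite G_zero big_ord0 mulr0 addr0 mul1r; apply: eq_bigr => x _.
  by rewrite /path_sum big_ord1 ffunE.
transitivity (path_expect pi P (fun p : {ffun 'I_N.+2 -> 'I_n} =>
   (fun y (s : R) => s ^+ 2) (p ord_max) (path_sum h p))); first by [].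
rewrite (G_step pi P h N (fun y (s : R) => s ^+ 2)) /=.
rewrite (@path_expect_ext _ _ pi P _ _ (fun q => path_sum h q ^+ 2 +
          (2 * ((P *m colf h) (q ord_max) 0 * path_sum h q) +
            (fun x => \sum_y P x y * h y ^+ 2) (q ord_max)))); last first.
  move=> q /=; set S := path_sum h q; set l := q ord_max.
  transitivity (\sum_y (P l y * S ^+ 2 + (2 * (P l y * h y * S) + P l y * h y ^+ 2))).
    by apply: eq_bigr => y _; ring.
  rewrite !big_split /= -mulr_suml tP.2 mul1r -mulr_sumr -mulr_suml mxE.
  by congr (_ + (2 * (_ * _) + _)); apply: eq_bigr => y _; rewrite mxE.
rewrite !path_expectD path_expectZ IH T2 (E1 N (fun x => \sum_y P x y * h y ^+ 2)) [X in _ = _ + 2 * X]big_ord_recr /=.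
have -> : \sum_(k < N.+1) \sum_x pi x * h x * (P ^+ k *m (P *m colf h)) x 0 =
          \sum_(k < N.+1) \sum_x pi x * h x * (P ^+ k.+1 *m colf h) x 0.
  by apply: eq_bigr => k _; apply: eq_bigr => x _; rewrite exprSr -mulmxE mulmxA.
rewrite stat_sum.
rewrite -[N.+2]addn1 natrD; ring.
Qed.

Lemma E_const N c :
  path_expect pi P (fun p : {ffun 'I_N.+1 -> 'I_n} => c) = c.
Proof. by rewrite (E1 N (fun _ => c)) -mulr_suml pp.2 mul1r. Qed.

Definition mean (f : 'I_n -> R) := \sum_x pi x * f x.
Definition cent (f : 'I_n -> R) x := f x - mean f.

Lemma mean_cent f : \sum_x pi x * cent f x = 0.
Proof.
rewrite /cent; under eq_bigr do rewrite mulrBr.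
by rewrite sumrB -mulr_suml pp.2 mul1r subrr.
Qed.

Lemma var_formula f N :
  var_sum pi P f N = N.+1%:R * (\sum_x pi x * cent f x ^+ 2) +
  2 * \sum_(j < N) \sum_(k < j.+1) \sum_x pi x * cent f x * ((P ^+ k.+1 *m colf (cent f)) x 0).
Proof.
rewrite -T3 /var_sum ES -/(mean f).
set c := N.+1%:R * mean f.
have Sg : forall p : {ffun 'I_N.+1 -> 'I_n}, path_sum f p = path_sum (cent f) p + c.
  move=> p; rewrite /path_sum /cent sumrB sumr_const card_ord /c mulr_natl; ring.
rewrite (@path_expect_ext _ _ pi P _ _ (fun p => path_sum (cent f) p ^+ 2 +
   ((2 * c) * path_sum (cent f) p + (fun _ => c ^+ 2) p))); last first.
  by move=> p /=; rewrite Sg; ring.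
rewrite !path_expectD path_expectZ ES mean_cent mulr0 mulr0 add0r E_const; ring.
Qed.

End Moments.

Lemma lim_aux (R : realType) (a : R) (b : nat -> R) (K : R) :
  (forall N, `|b N| <= K) -> limn (fun N => a - b N / N.+1%:R) = a.
Proof.
move=> hb; apply: cvg_lim; first exact: Rhausdorff.
have h0 : (b N / N.+1%:R @[N --> \oo] --> (0 : R))%classic.
  apply: (@squeeze_cvgr _ _ _ _ (fun N => - (K * harmonic N)) (fun N => K * harmonic N)).
  - near=> N; rewrite /harmonic /=.
    have hi : 0 < (N.+1%:R : R)^-1 by rewrite invr_gt0 ltr0Sn.
    have := hb N; rewrite ler_norml => /andP [h1 h2].
    rewrite -mulNr !ler_wpM2r ?(ltW hi) //.
  - rewrite -oppr0 -(mulr0 K); apply: cvgN; apply: cvgMl_tmp; exact: cvg_harmonic.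
  - rewrite -(mulr0 K); apply: cvgMl_tmp; exact: cvg_harmonic.
rewrite -[X in (_ --> X)%classic]subr0.
exact: (cvgB (cvg_cst a) h0).
Unshelve. all: by end_near.
Qed.

Section Lim.
Variables (R : realType) (n : nat) (pi : 'I_n -> R) (P : 'M[R]_n).
Hypotheses (pp : prob_pos pi) (tP : transition_matrix P) (rev : reversible pi P)
  (irr : irreducible P).

Definition Lf (g : 'I_n -> R) (X : 'M[R]_n) := \sum_x pi x * g x * ((X *m colf g) x 0).

Lemma LfD g X Y : Lf g (X + Y) = Lf g X + Lf g Y.
Proof. by rewrite /Lf -big_split; apply: eq_bigr => x _; rewrite mulmxDl mxE mulrDr. Qed.

Lemma LfN g X : Lf g (- X) = - Lf g X.
Proof. by rewrite /Lf -sumrN; apply: eq_bigr => x _; rewrite mulNmx mxE mulrN. Qed.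

Lemma LfB g X Y : Lf g (X - Y) = Lf g X - Lf g Y.
Proof. by rewrite LfD LfN. Qed.

Lemma Lf_sum g m (F : 'I_m -> 'M[R]_n) : Lf g (\sum_(i < m) F i) = \sum_(i < m) Lf g (F i).
Proof.
elim: m F => [|m IH] F; first by rewrite !big_ord0 /Lf; apply: big1 => x _; rewrite mul0mx mxE mulr0.
by rewrite !big_ord_recr /= LfD IH.
Qed.

Lemma LfMn g X N : Lf g (X *+ N) = Lf g X *+ N.
Proof.
elim: N => [|N IH]; last by rewrite !mulrS LfD IH.
by rewrite !mulr0n /Lf big1 // => x _; rewrite mul0mx mxE mulr0.
Qed.

Let M := Mm pi P.
Let Z := invmx M.
Let A : 'M[R]_n := 1 - M.

Lemma ZM : Z * M = 1.
Proof. by rewrite -mulmxE mulVmx // Mm_unit. Qed.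

Lemma MZ : M * Z = 1.
Proof. by rewrite -mulmxE mulmxV // Mm_unit. Qed.

Lemma A_def : A = P - Pim pi.
Proof.
rewrite /A /M /Mm; change (1%:M - (1%:M - P + Pim pi) = P - Pim pi).
by rewrite opprD opprB addrA [1%:M + _]addrC subrK.
Qed.

Lemma Apow k : A ^+ k.+1 = P ^+ k.+1 - Pim pi.
Proof.
elim: k => [|k IH]; first by rewrite expr1 A_def.
rewrite exprSr IH A_def mulrBl !mulrBr -exprSr.
have h1 : P ^+ k.+1 * Pim pi = Pim pi by rewrite -mulmxE PPim //; apply: stoch_pow.
have h2 : Pim pi * P = Pim pi by rewrite -mulmxE PimP.
have h3 : Pim pi * Pim pi = Pim pi by rewrite -mulmxE PimPim.
by rewrite h1 h2 h3 subrr subr0.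
Qed.

Lemma tele m : M * (\sum_(k < m) A ^+ k) = 1 - A ^+ m.
Proof.
elim: m => [|m IH]; first by rewrite big_ord0 mulr0 expr0 subrr.
rewrite big_ord_recr /= mulrDr IH.
have -> : M = 1 - A by rewrite /A opprB addrC subrK.
by rewrite mulrBl mul1r -exprS addrA subrK.
Qed.

Lemma geom m : \sum_(k < m) A ^+ k = Z * (1 - A ^+ m).
Proof. by rewrite -tele mulrA ZM mul1r. Qed.

Lemma dsum N : \sum_(j < N) \sum_(k < j.+1) A ^+ k.+1 =
  (A * Z) *+ N - A * Z * A * Z * (1 - A ^+ N).
Proof.
have e1 : forall m, \sum_(k < m) A ^+ k.+1 = A * (Z * (1 - A ^+ m)).
  by move=> m; rewrite -geom mulr_sumr; apply: eq_bigr => k _; rewrite exprS.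
under eq_bigr do rewrite e1 mulrBr mulr1 mulrBr mulrA.
rewrite sumrB sumr_const card_ord; congr (_ - _).
by rewrite -mulr_sumr e1 !mulrA.
Qed.

Lemma LfPim g : \sum_x pi x * g x = 0 -> Lf g (Pim pi) = 0.
Proof.
move=> g0; rewrite /Lf big1 // => x _; rewrite mxE.
rewrite (eq_bigr (fun y => pi y * g y)) ?g0 ?mulr0 // => y _; by rewrite !mxE.
Qed.

Lemma LfP g k : \sum_x pi x * g x = 0 -> Lf g (P ^+ k.+1) = Lf g (A ^+ k.+1).
Proof. by move=> g0; rewrite Apow LfB LfPim // subr0. Qed.

Lemma bound_entries N x y : `|(A ^+ N) x y| <= 1.
Proof.
case: N => [|k].
  rewrite expr0; change (`|(1%:M : 'M[R]_n) x y| <= 1); rewrite mxE.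
  by case: (x == y); rewrite ?normr1 ?normr0.
rewrite Apow !mxE.
have [T0 _] := stoch_pow tP k.+1.
have T1 := stoch_le1 (stoch_pow tP k.+1) x y.
have p0 := pp.1 y.
have p1 : pi y <= 1.
  rewrite -pp.2 (bigD1 y) //= lerDl; apply: sumr_ge0 => z _; exact: ltW (pp.1 z).
have := T0 x y; rewrite ler_norml => h; apply/andP; split; lra.
Qed.

Lemma Lbound g (W : 'M[R]_n) : exists K, forall Y : 'M[R]_n,
  (forall x y, `|Y x y| <= 1) -> `|Lf g (W * Y)| <= K.
Proof.
exists (\sum_x \sum_y \sum_z `|pi x * g x * W x z * g y|) => Y hY.
have E : Lf g (W * Y) = \sum_x \sum_y \sum_z (pi x * g x * W x z * g y) * Y z y.
  rewrite /Lf; apply: eq_bigr => x _; rewrite mxE mulr_sumr; apply: eq_bigr => y _.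
  rewrite -mulmxE !mxE mulr_suml mulr_sumr; apply: eq_bigr => z _; ring.
rewrite E; apply: (le_trans (ler_norm_sum _ _ _)); apply: ler_sum => x _.
apply: (le_trans (ler_norm_sum _ _ _)); apply: ler_sum => y _.
apply: (le_trans (ler_norm_sum _ _ _)); apply: ler_sum => z _.
by rewrite normrM ler_piMr.
Qed.

Lemma Lf1 g : Lf g 1 = \sum_x pi x * g x ^+ 2.
Proof.
rewrite /Lf; apply: eq_bigr => x _; change ((1%:M : 'M[R]_n)) with (1 : 'M[R]_n).
by rewrite mul1mx mxE expr2 mulrA.
Qed.

Lemma asym_formula f : asym_var pi P f =
  2 * Lf (cent pi f) Z - \sum_x pi x * cent pi f x ^+ 2.
Proof.
set g := cent pi f; set c0 := \sum_x pi x * g x ^+ 2.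
have g0 : \sum_x pi x * g x = 0 := mean_cent pp f.
set X := Lf g (A * Z); set W := Lf g (A * Z * A * Z).
have e : forall N, var_sum pi P f N / N.+1%:R = (c0 + 2 * X) -
    (2 * X + 2 * W - 2 * Lf g (A * Z * A * Z * A ^+ N)) / N.+1%:R.
  move=> N; rewrite var_formula // -/g -/c0.
  have -> : \sum_(j < N) \sum_(k < j.+1) \sum_x pi x * g x * (P ^+ k.+1 *m colf g) x 0 =
      Lf g (\sum_(j < N) \sum_(k < j.+1) A ^+ k.+1).
    rewrite Lf_sum; apply: eq_bigr => j _; rewrite Lf_sum; apply: eq_bigr => k _.
    by rewrite -LfP.
  rewrite dsum LfB LfMn (mulrBr (A * Z * A * Z)) mulr1 LfB -/X -/W -mulr_natr.
  have hc : (N%:R + 1 : R) != 0 by rewrite natr1 pnatr_eq0.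
  rewrite -natr1; field => //.
have [K hK] := Lbound g (A * Z * A * Z).
rewrite /asym_var (funext e) (@lim_aux _ _ _ (`|2 * X| + `|2 * W| + `|2| * K)).
  rewrite /X (_ : A * Z = Z - 1); last by rewrite /A mulrBl mul1r MZ.
  by rewrite LfB Lf1 -/c0; ring.
move=> N; apply: (le_trans (ler_normB _ _)); apply: lerD.
  exact: ler_normD.
by rewrite normrM ler_wpM2l // hK // => x y; apply: bound_entries.
Qed.

End Lim.

Section CharP.
Variables (R : realType) (n : nat).
Implicit Types (A B C P Q T Pi : 'M[R]_n).

Lemma horner_char A x : (char_poly A).[x] = \det (x%:M - A).
Proof.
rewrite /char_poly -horner_evalE -det_map_mx /char_poly_mx map_mxB /=.
congr (\det _); apply/matrixP => i j; rewrite !mxE.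
by case: (i == j); rewrite /= ?mulr1n ?mulr0n !horner_evalE ?hornerX ?hornerC // rmorph0.
Qed.

Lemma poly_eq_gt1 (p q : {poly R}) : (forall x, 1 < x -> p.[x] = q.[x]) -> p = q.
Proof.
move=> h; apply/eqP; rewrite -subr_eq0; apply: contraT => hne.
set rs := [seq (i.+2)%:R : R | i <- iota 0 (size (p - q))].
have : (size rs < size (p - q)%R)%N.
  apply: max_poly_roots hne _ _.
    apply/allP => x /mapP [i _ ->]; rewrite /root hornerD hornerN h ?subrr //.
    by rewrite ltr1n.
  by rewrite map_inj_uniq ?iota_uniq // => a b /eqP; rewrite eqr_nat => /eqP [].
by rewrite /rs size_map size_iota ltnn.
Qed.

Lemma shift_id s T Pi : s != 0 -> T *m Pi = Pi -> Pi *m Pi = Pi ->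
  (s%:M - (T - Pi)) *m (1%:M - s^-1 *: Pi) = s%:M - T.
Proof.
move=> s0 TP PP.
rewrite mulmxBl !mulmxBr !mulmx1 mul_scalar_mx !mulmxBl -!scalemxAr TP PP.
by apply/matrixP => i j; rewrite !mxE; field.
Qed.

Lemma D_unit s Pi : 1 < s -> Pi *m Pi = Pi -> (1%:M - s^-1 *: Pi) \in unitmx.
Proof.
move=> s1 PP.
have s0 : s != 0 by apply: lt0r_neq0; lra.
have s10 : s - 1 != 0 by apply: lt0r_neq0; lra.
have : (1%:M - s^-1 *: Pi) *m (1%:M + (s - 1)^-1 *: Pi) = 1%:M.
  rewrite mulmxBl !mulmxDr !mulmx1 mul1mx -!scalemxAr -scalemxAl PP.
  apply/matrixP => i j; rewrite !mxE; field.
  by apply/andP; split.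
by case/mulmx1_unit.
Qed.

Lemma char_shift Pi P Q : P *m Pi = Pi -> Q *m Pi = Pi -> Pi *m Pi = Pi ->
  char_poly P = char_poly Q -> char_poly (P - Pi) = char_poly (Q - Pi).
Proof.
move=> hP hQ hPi cPQ; apply: poly_eq_gt1 => s s1; rewrite !horner_char.
have s0 : s != 0 by apply: lt0r_neq0; lra.
have hD := D_unit s1 hPi; rewrite unitmxE unitfE in hD.
apply: (mulIf hD); rewrite -!det_mulmx !shift_id // -!horner_char.
by rewrite cPQ.
Qed.

Lemma det_inv_shift C y : 1 < y -> (1%:M - C) \in unitmx ->
  \det (y%:M - invmx (1%:M - C)) =
  y ^+ n * (char_poly C).[(y - 1) / y] / (char_poly C).[1].
Proof.
move=> y1 hu.
have y0 : y != 0 by apply: lt0r_neq0; lra.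
have hd : \det (1%:M - C) != 0 by rewrite -unitfE -unitmxE.
have e : (y%:M - invmx (1%:M - C)) *m (1%:M - C) = y *: (((y - 1) / y)%:M - C).
  rewrite mulmxBl mulVmx // mul_scalar_mx.
  apply/matrixP => i j; rewrite !mxE; by case: (i == j); rewrite /= ?mulr1n ?mulr0n; field; rewrite ?y0.
rewrite !horner_char; apply: (mulIf hd); rewrite divfK //.
by rewrite -det_mulmx e detZ.
Qed.

Lemma char_inv A B : char_poly A = char_poly B ->
  (1%:M - A) \in unitmx -> (1%:M - B) \in unitmx ->
  char_poly (invmx (1%:M - A)) = char_poly (invmx (1%:M - B)).
Proof.
move=> cAB uA uB; apply: poly_eq_gt1 => y y1; rewrite !horner_char.
by rewrite !det_inv_shift // cAB.
Qed.

Lemma trace_eq_char A B : (0 < n)%N -> char_poly A = char_poly B -> \tr A = \tr B.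
Proof.
move=> n0 cAB; apply: oppr_inj; rewrite -!char_poly_trace //; by rewrite cAB.
Qed.

End CharP.

Section Final.
Variables (R : realType) (n : nat) (pi : 'I_n -> R).
Hypothesis pp : prob_pos pi.
Implicit Types (T : 'M[R]_n).

Lemma Mm_row T : transition_matrix T -> forall x, \sum_y Mm pi T x y = 1.
Proof.
move=> [_ T1] x.
rewrite (eq_bigr (fun y => (x == y)%:R - T x y + pi y)); last first.
  by move=> y _; rewrite /Mm /Pim !mxE.
rewrite big_split sumrB /= T1 pp.2.
have -> : \sum_y ((x == y)%:R : R) = 1.
  rewrite (bigD1 x) //= eqxx big1 ?addr0 // => y /negbTE; by rewrite eq_sym => ->.
by rewrite subrr add0r.
Qed.

Lemma Z_row T : transition_matrix T -> irreducible T -> reversible pi T ->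
  forall x, \sum_y invmx (Mm pi T) x y = 1.
Proof.
move=> tT iT rT.
have u := Mm_unit pp tT iT rT.
have e : Mm pi T *m (const_mx 1 : 'cV[R]_n) = const_mx 1.
  apply/matrixP => x j; rewrite [LHS]mxE [RHS]mxE.
  under eq_bigr do rewrite [const_mx _ _ _]mxE mulr1.
  exact: Mm_row.
have e2 : invmx (Mm pi T) *m (const_mx 1 : 'cV[R]_n) = const_mx 1.
  by rewrite -{1}e mulmxA mulVmx // mul1mx.
move=> x; have := congr1 (fun v : 'cV[R]_n => v x 0) e2.
rewrite [LHS]mxE [RHS]mxE.
by under eq_bigr do rewrite [const_mx _ _ _]mxE mulr1.
Qed.

Lemma Z_sa T : transition_matrix T -> irreducible T -> reversible pi T ->
  forall i j, pi i * invmx (Mm pi T) i j = pi j * invmx (Mm pi T) j i.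
Proof.
move=> tT iT rT.
have u := Mm_unit pp tT iT rT.
set M := Mm pi T; set Z := invmx M.
set D := diag_mx (\row_i pi i).
have hM : D *m M = M^T *m D.
  apply/matrixP => i j; rewrite mul_diag_mx mul_mx_diag !mxE /M /Mm /Pim ?mxE.
  have := rT i j; case: (eqVneq i j) => [->|ne] h; rewrite ?eqxx ?(negbTE ne) ?eq_sym ?(negbTE ne).
    by rewrite mulrC.
  by rewrite /= mulrDr mulrBr h; ring.
have hZ : D *m Z = Z^T *m D.
  rewrite -[RHS]mulmx1 -(mulmxV u) -/Z !mulmxA -[Z^T *m D *m M]mulmxA hM.
  by rewrite mulmxA -trmx_mul mulmxV // trmx1 mul1mx.
move=> i j; have := congr1 (fun X : 'M[R]_n => X i j) hZ.
by rewrite mul_diag_mx mul_mx_diag !mxE => ->; rewrite mulrC.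
Qed.

Definition qf (E : 'M[R]_n) (h : 'I_n -> R) := \sum_x \sum_y pi x * h x * E x y * h y.

Lemma Lf_q (E : 'M[R]_n) h : (forall x, \sum_y E x y = 0) ->
  (forall i j, pi i * E i j = pi j * E j i) -> Lf pi (cent pi h) E = qf E h.
Proof.
move=> E1 Es; rewrite /Lf /qf /cent.
set m := mean pi h.
have inner : forall x, (E *m colf (fun x => h x - m)) x 0 = \sum_y E x y * h y.
  move=> x; rewrite mxE.
  under eq_bigr do rewrite mxE mulrBr.
  by rewrite sumrB -mulr_suml E1 mul0r subr0.
under eq_bigr do rewrite inner mulrBr mulrBl.
rewrite sumrB.
have -> : \sum_x pi x * m * (\sum_y E x y * h y) = 0.
  rewrite (eq_bigr (fun x => m * (\sum_y pi x * E x y * h y))); last first.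
    move=> x _.
    have -> : \sum_y pi x * E x y * h y = pi x * \sum_y E x y * h y.
      by rewrite mulr_sumr; apply: eq_bigr => y _; ring.
    ring.
  rewrite -mulr_sumr exchange_big /=.
  rewrite (eq_bigr (fun y => pi y * h y * \sum_x E y x)) ?mulr0 //.
    by rewrite big1 ?mulr0 // => y _; rewrite E1 mulr0.
  move=> y _; rewrite mulr_sumr; apply: eq_bigr => x _; rewrite Es; ring.
rewrite subr0; apply: eq_bigr => x _; rewrite mulr_sumr; apply: eq_bigr => y _; ring.
Qed.

Lemma sum2 (F : 'I_n -> R) i j t :
  \sum_x ((x == i)%:R + t * (x == j)%:R) * F x = F i + t * F j.
Proof.
under eq_bigr do rewrite mulrDl -mulrA.
by rewrite big_split /= sum_delta -mulr_sumr sum_delta.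
Qed.

Lemma sum2' (F : 'I_n -> R) i j t :
  \sum_x F x * ((x == i)%:R + t * (x == j)%:R) = F i + t * F j.
Proof. by rewrite -sum2; apply: eq_bigr => x _; rewrite mulrC. Qed.

Lemma q_delta (E : 'M[R]_n) i j t :
  qf E (fun x => (x == i)%:R + t * (x == j)%:R) =
  pi i * E i i + t * (pi i * E i j) + t * (pi j * E j i) + t ^+ 2 * (pi j * E j j).
Proof.
rewrite /qf (eq_bigr (fun x => ((x == i)%:R + t * (x == j)%:R) *
   (pi x * \sum_y E x y * ((y == i)%:R + t * (y == j)%:R)))); last first.
  by move=> x _; rewrite !mulr_sumr; apply: eq_bigr => y _; ring.
rewrite (sum2 (fun x => pi x * \sum_y E x y * ((y == i)%:R + t * (y == j)%:R))) /= (sum2' (fun y => E i y)) (sum2' (fun y => E j y)); ring.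
Qed.

End Final.

Lemma Mm_shift (R : realType) n (pi : 'I_n -> R) (T : 'M[R]_n) :
  Mm pi T = 1%:M - (T - Pim pi).
Proof. by apply/matrixP => i j; rewrite /Mm !mxE; ring. Qed.

Lemma dom_eq (R : realType) (n : nat) (pi : 'I_n -> R) (P Q : 'M[R]_n) :
  prob_pos pi ->
  transition_matrix P -> transition_matrix Q ->
  irreducible P -> irreducible Q ->
  reversible pi P -> reversible pi Q ->
  char_poly P = char_poly Q ->
  efficiency_dominates pi P Q -> P = Q.
Proof.
move=> pp tP tQ iP iQ rP rQ cPQ dom.
have uP := Mm_unit pp tP iP rP; have uQ := Mm_unit pp tQ iQ rQ.
set ZP := invmx (Mm pi P); set ZQ := invmx (Mm pi Q).
set E := ZQ - ZP.
have n0 : (0 < n)%N.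
  case: n pi pp {P Q tP tQ iP iQ rP rQ cPQ dom uP uQ ZP ZQ E} => // pi [_].
  by rewrite big_ord0 => /eqP; rewrite eq_sym oner_eq0.
have trE : \sum_i E i i = 0.
  have cZ : char_poly ZP = char_poly ZQ.
    rewrite /ZP /ZQ !Mm_shift; apply: char_inv; rewrite -?Mm_shift //.
    by apply: char_shift => //; [apply: PPim | apply: PPim | apply: PimPim].
  have := trace_eq_char n0 cZ; rewrite /mxtrace => h.
  rewrite /E; under eq_bigr do rewrite !mxE.
  by rewrite sumrB h subrr.
have E1 : forall x, \sum_y E x y = 0.
  move=> x; rewrite /E; under eq_bigr do rewrite !mxE.
  by rewrite sumrB /ZP /ZQ !Z_row // subrr.
have Es : forall i j, pi i * E i j = pi j * E j i.
  move=> i j; rewrite /E !mxE !mulrBr /ZP /ZQ.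
  by rewrite (Z_sa pp tP iP rP i j) (Z_sa pp tQ iQ rQ i j).
have q0 : forall h, 0 <= qf pi E h.
  move=> h; rewrite -Lf_q // /E LfB subr_ge0.
  have := dom h; rewrite !asym_formula //; lra.
have Eii : forall i, E i i = 0.
  move=> i; apply: (@psumr_eq0P _ _ predT (fun i => E i i)) => // k _.
  have := q0 (fun x => (x == k)%:R + 0 * (x == k)%:R); rewrite q_delta.
  rewrite !mul0r expr0n /= mul0r !addr0 pmulr_rge0 //; exact: pp.1.
have Eij : forall i j, E i j = 0.
  move=> i j; have p0 := pp.1 i.
  have h1 := q0 (fun x => (x == i)%:R + 1 * (x == j)%:R).
  have h2 := q0 (fun x => (x == i)%:R + (-1) * (x == j)%:R).
  rewrite !q_delta !Eii -(Es i j) in h1 h2.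
  have : pi i * E i j = 0 by lra.
  by move/eqP; rewrite mulf_eq0 gt_eqF //= => /eqP.
have eZ : ZQ = ZP by apply/eqP; rewrite -subr_eq0; apply/eqP/matrixP => i j; rewrite Eij mxE.
have eM : Mm pi P = Mm pi Q by rewrite -[Mm pi P]invmxK -[Mm pi Q]invmxK -/ZP -/ZQ eZ.
by move: eM; rewrite /Mm => /addIr /addrI /oppr_inj.
Qed.

Unset Implicit Arguments.
Theorem corollary2 (R : realType) (n : nat) (pi : 'I_n -> R) (P Q : 'M[R]_n) :
  prob_pos pi ->
  transition_matrix P -> transition_matrix Q ->
  irreducible P -> irreducible Q ->
  reversible pi P -> reversible pi Q ->
  char_poly P = char_poly Q ->
  P <> Q ->
  ~ efficiency_dominates pi P Q /\ ~ efficiency_dominates pi Q P.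
Proof.
move=> pp tP tQ iP iQ rP rQ cPQ nPQ; split => dom; apply: nPQ.
  exact: (dom_eq pp tP tQ iP iQ rP rQ cPQ dom).
by symmetry; exact: (dom_eq pp tQ tP iQ iP rQ rP (esym cPQ) dom).
Qed.
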